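(* Let $(\Omega,\mathscr H,\mathbb E)$ be a sub-linear expectation space with $\mathbb E[X]=\sup_{P\in\mathcal P}E_P[X]$ for a family $\mathcal P$ of $\sigma$-additive probability measures, and let $\nu(A)=\inf_{P\in\mathcal P}P(A)$. Let $\{Z_l\}_{l\ge1}$ be random variables in this space and $T_n:=\sum_{l=1}^n Z_l$. Suppose there are positive constants $M_0,M_1$ such that for all $n\ge1$ and all $n_1\le n_2$: (i) $\mathbb E[T_n]\le 0$; (ii) $\mathbb E[T_n^2]\le M_0\, n+(\mathbb E[T_n])^2$ (or, alternatively, $\mathbb E[T_n^2]\le M_0\, n$); (iii) $\sum_{l=n_1}^{n_2}\mathbb E[Z_l^2]\le M_1 (n_2-n_1+1)$. Then $$\nu\Big(\limsup_{n\to\infty}\frac{T_n}{n}\le 0\Big)=1.$$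
   Context: A sub-linear expectation space $(\Omega,\mathscr H,\mathbb E)$ consists of a measurable space $(\Omega,\mathcal F)$, a linear space $\mathscr H$ of real measurable functions on $\Omega$ such that $X_1,\dots,X_n\in\mathscr H$ implies $\varphi(X_1,\dots,X_n)\in\mathscr H$ for every bounded Lipschitz $\varphi:\mathbb R^n\to\mathbb R$, and a functional $\mathbb E:\mathscr H\to\mathbb R$ that is monotone ($X\ge Y\Rightarrow \mathbb E[X]\ge\mathbb E[Y]$), constant preserving ($\mathbb E[c]=c$), sub-additive ($\mathbb E[X+Y]\le\mathbb E[X]+\mathbb E[Y]$) and positively homogeneous ($\mathbb E[\lambda X]=\lambda\mathbb E[X]$ for $\lambda\ge0$). It is assumed that $\mathbb E[X]=\sup_{P\in\mathcal P}E_P[X]$, where $E_P$ is expectation under $P$; this formula is used to evaluate $\mathbb E$ on all random variables appearing (e.g. $Z_l^2$, $T_n^2$). The upper probability is $\mathbb V(A)=\sup_{P\in\mathcal P}P(A)$ and the lower probability is $\nu(A)=\inf_{P\in\mathcal P}P(A)$ for $A\in\mathcal F$. *)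

(* Defs.v *)
From HB Require Import structures.
From mathcomp Require Import all_boot all_order all_algebra.
From mathcomp Require Import all_classical all_reals all_analysis.
Set Implicit Arguments. Unset Strict Implicit. Unset Printing Implicit Defensive.
Import Order.TTheory GRing.Theory Num.Theory.
Local Open Scope classical_set_scope.
Local Open Scope ring_scope.

Definition upperE d (T : measurableType d) (R : realType)
  (Pfam : set (probability T R)) (X : T -> R) : \bar R :=
  ereal_sup [set (\int[P]_x (X x)%:E)%E | P in Pfam].

Definition lowerP d (T : measurableType d) (R : realType)
  (Pfam : set (probability T R)) (A : set T) : \bar R :=
  ereal_inf [set P A | P in Pfam].

Definition psum (T : Type) (R : realType) (Z : nat -> T -> R) (n : nat) : T -> R :=
  fun w => \sum_(1 <= l < n.+1) Z l w.

(* Main.v *)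
Require Import Defs.
From HB Require Import structures.
From mathcomp Require Import all_boot all_order all_algebra.
From mathcomp Require Import all_classical all_reals all_analysis.
From mathcomp Require Import ring lra zify.
Import Order.TTheory GRing.Theory Num.Theory.
Import measurable_realfun.
Local Open Scope classical_set_scope.
Local Open Scope ring_scope.

Lemma step_ineq (R : realType) (s x q n : R) :
  0 <= n -> 0 <= q -> s ^+ 2 <= n * q -> (s + x) ^+ 2 <= (n + 1) * (q + x ^+ 2).
Proof.
move=> n0 q0.
have [->|nz] := eqVneq n 0.
  rewrite mul0r => h; have s0 : s = 0 by apply/eqP; rewrite -sqrf_eq0 eq_le sqr_ge0 andbT.
  by rewrite s0 add0r add0r mul1r lerDr.
move=> h; have np : 0 < n by rewrite lt_neqAle eq_sym nz.
have H : 0 <= n * ((n + 1) * (q + x ^+ 2) - (s + x) ^+ 2).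
  have := sqr_ge0 (s - n * x). nra.
rewrite -subr_ge0; move: H; rewrite pmulr_rge0 //.
Qed.

Lemma cs_sum (R : realType) (a : nat -> R) (i j : nat) : (i <= j)%N ->
  (\sum_(i <= l < j) a l) ^+ 2 <= (j - i)%:R * \sum_(i <= l < j) a l ^+ 2.
Proof.
elim: j => [|j IH] hij.
  by rewrite big_geq // expr0n /= mul0r.
have [hij'|] := leqP i j; last first.
  move=> hji; have -> : i = j.+1 by apply/eqP; rewrite eqn_leq hij hji.
  by rewrite !big_geq // expr0n /= mulr0.
rewrite !big_nat_recr //= subSn // -natr1.

apply: step_ineq => //; last exact: IH.
by apply: sumr_ge0 => l _; exact: sqr_ge0.
Qed.

Lemma nat_sqrt (n : nat) : (1 <= n)%N -> exists k, (k.+1 * k.+1 <= n < k.+2 * k.+2)%N.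
Proof.
elim: n => [//|n IH] _.
have [->|n1] := eqVneq n 0%N; first by exists 0%N.
have [k /andP[h1 h2]] : exists k, (k.+1 * k.+1 <= n < k.+2 * k.+2)%N by apply: IH; lia.
have [h3|h3] := ltnP n.+1 (k.+2 * k.+2).
  by exists k; apply/andP; split; lia.
by exists k.+1; apply/andP; split; lia.
Qed.

Lemma esup_le_ev (R : realType) (u : (\bar R)^nat) (l : \bar R) (N : nat) :
  (forall n, (N <= n)%N -> (u n <= l)%E) -> (limn_esup u <= l)%E.
Proof.
move=> h; rewrite /limn_esup /limf_esup.
apply: (le_trans (ereal_inf_lbound _)).
  exists [set n | (N <= n)%N]; first by exists N.
  reflexivity.
by apply: ub_ereal_sup => _ [n hn <-]; exact: h.
Qed.

Lemma sq_le (R : realType) (x y : R) : 0 <= y -> x ^+ 2 <= y ^+ 2 -> x <= y.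
Proof. move=> y0 h; nra. Qed.

Lemma det (R : realType) (z m g : nat -> R) :
  (forall k, m (k.+1 * k.+1)%N <= 0) -> g @ \oo --> 0 ->
  (forall k, ((\sum_(1 <= l < (k.+1 * k.+1).+1) z l) - m (k.+1 * k.+1)%N) ^+ 2
       <= g k * (k.+1%:R ^+ 3 * k.+2%:R)) ->
  (forall k, \sum_((k.+1 * k.+1).+1 <= l < (k.+2 * k.+2).+1) z l ^+ 2
       <= g k * (k.+1%:R ^+ 2 * k.+2%:R)) ->
  (limn_esup (fun n => ((\sum_(1 <= l < n.+1) z l) / n%:R)%:E) <= 0)%E.
Proof.
move=> hm hg hA hB.
apply/lee_addgt0Pr => e e0; rewrite add0e.
pose c := e / 2.
have c0 : 0 < c by rewrite divr_gt0.
pose del := c ^+ 2 / 6.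
have del0 : 0 < del by rewrite divr_gt0 // exprn_gt0.
have [K _ hK] := (cvgrPdist_lt _ _).1 hg del del0.
apply: (@esup_le_ev _ _ _ (K.+1 * K.+1)%N) => n hn.
have [k /andP[hk1 hk2]] := @nat_sqrt n (leq_trans (isT : (1 <= K.+1 * K.+1)%N) hn).
have Kk : (K <= k)%N by nia.
have gk : g k <= del.
  have := hK k Kk; rewrite /= sub0r normrN => h; exact: (le_trans (ler_norm _) (ltW h)).
set N := (k.+1 * k.+1)%N in hk1 *.
pose r : R := k.+1%:R.
have r1 : 1 <= r by rewrite /r ler1n.
have hr2 : k.+2%:R = r + 1 by rewrite /r -natr1.
have hN : N%:R = r * r by rewrite /N natrM.
have n0 : 0 < n%:R :> R by rewrite ltr0n; nia.
have hnN : (r * r <= n%:R) by rewrite -hN ler_nat.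
rewrite lee_fin ler_pdivrMr //.
rewrite (big_cat_nat _ (n := N.+1)) //=.
set tN := \sum_(1 <= l < N.+1) z l.
set D := \sum_(N.+1 <= l < n.+1) z l.
have h1 : tN - m N <= c * (r * r).
  apply: sq_le; first by apply: mulr_ge0; [exact: ltW| nra].
  apply: (le_trans (hA k)); rewrite -/r hr2.
  have : g k * (r ^+ 3 * (r + 1)) <= del * (r ^+ 3 * (r + 1)).
    by apply: ler_wpM2r => //; nra.
  move/le_trans; apply; rewrite /del; nra.
have h2 : D <= c * (r * r).
  apply: sq_le; first by apply: mulr_ge0; [exact: ltW| nra].
  rewrite /D; apply: (le_trans (@cs_sum _ z _ _ _)); first by rewrite /N; nia.
  have hQ : \sum_(N.+1 <= l < n.+1) z l ^+ 2 <= del * (r ^+ 2 * (r + 1)).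
    apply: (le_trans _ (le_trans (hB k) _)).
      rewrite [X in _ <= X](big_cat_nat _ (n := n.+1)) //=; last by rewrite /N; nia.
      by rewrite lerDl; apply: sumr_ge0 => l _; exact: sqr_ge0.
    by rewrite -/r hr2; apply: ler_wpM2r => //; nra.
  have hc : (n.+1 - N.+1)%:R <= 3 * r.
    rewrite subSS /r -natrM ler_nat /N; nia.
  have Q0 : 0 <= \sum_(N.+1 <= l < n.+1) z l ^+ 2.
    by apply: sumr_ge0 => l _; exact: sqr_ge0.
  apply: (le_trans (ler_wpM2r Q0 hc)).
  apply: (le_trans (ler_wpM2l _ hQ)); first nra.
  rewrite /del; nra.
have ec : e = c + c by rewrite /c -splitr.
have := hm k; have := ler_wpM2l (ltW c0) hnN; rewrite ec; nra.
Qed.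

Lemma terms0 (R : realType) (g : nat -> R) : (forall k, 0 <= g k) ->
  (\sum_(k <oo) (g k)%:E)%E \is a fin_num -> g @ \oo --> 0.
Proof.
move=> g0 hf; apply: cvg_series_cvg_0; apply: nondecreasing_is_cvgn.
  move=> a b ab; rewrite /series /=.
  rewrite [X in _ <= X](big_cat_nat _ (n := a)) //= lerDl.
  by apply: sumr_ge0 => i _; exact: g0.
exists (fine (\sum_(k <oo) (g k)%:E)%E) => _ [n _ <-].
rewrite -lee_fin fineK // /series /= -sumEFin.
by apply: nneseries_lim_ge => i _ _; rewrite lee_fin.
Qed.

Lemma sq_int (d : measure_display) (T : measurableType d) (R : realType)
  (P : probability T R) (f : T -> R) :
  measurable_fun setT f -> (\int[P]_x (f x ^+ 2)%:E < +oo)%E ->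
  P.-integrable setT (EFin \o (fun x => f x ^+ 2)) /\ P.-integrable setT (EFin \o f).
Proof.
move=> mf hf.
have mf2 : measurable_fun setT (fun x => f x ^+ 2) by apply: measurable_funX.
have i2 : P.-integrable setT (EFin \o (fun x => f x ^+ 2)).
  apply/integrableP; split; first exact/measurable_EFinP.
  apply: le_lt_trans hf; apply: ge0_le_integral => //.
  - apply: measurableT_comp => //; apply/measurable_EFinP; exact: mf2.
  - by apply/measurable_EFinP.
  - by move=> x _; rewrite /comp abse_EFin ger0_norm ?sqr_ge0.
split => //.
apply: (@le_integrable _ _ _ P setT _ _ (EFin \o (fun x => 1 + f x ^+ 2))) => //.
- exact/measurable_EFinP.
- move=> x _; rewrite /comp !abse_EFin lee_fin.
  rewrite (ger0_norm (_ : 0 <= 1 + f x ^+ 2)); last by rewrite addr_ge0 // sqr_ge0.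
  have := normr_ge0 (f x); have := sqr_ge0 (`|f x| - 1); rewrite -[f x ^+ 2]real_normK ?num_real //.
  nra.
- have -> : (EFin \o (fun x => 1 + f x ^+ 2)) = (EFin \o cst 1) \+ (EFin \o (fun x => f x ^+ 2)).
    by apply/funext => x /=; rewrite EFinD.
  apply: integrableD => //; exact: finite_measure_integrable_cst.
Qed.

Lemma tele (R : realType) (c : R) (n : nat) :
  \sum_(0 <= k < n) (c / (k.+1%:R * k.+2%:R)) = c - c / n.+1%:R.
Proof.
elim: n => [|n IH]; first by rewrite big_nil divr1 subrr.
rewrite big_nat_recr //= IH.
have h1 : n.+1%:R != 0 :> R by rewrite pnatr_eq0.
have h2 : n.+2%:R != 0 :> R by rewrite pnatr_eq0.
have h3 : n.+2%:R = n.+1%:R + 1 :> R by rewrite -natr1.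
rewrite h3 in h2 *; field; have := ler0n R n.
by move=> h; apply/andP; split; rewrite gt_eqF //; lra.
Qed.

Lemma per_P (d : measure_display) (T : measurableType d) (R : realType)
  (P : probability T R) (Z : nat -> T -> R) (M0 M1 : R) (U : nat -> \bar R) :
  (forall l, measurable_fun setT (Z l)) -> 0 < M0 -> 0 < M1 ->
  (forall l, (1 <= l)%N -> (\int[P]_x (Z l x ^+ 2)%:E <= M1%:E)%E) ->
  (forall n, (1 <= n)%N -> (\int[P]_x (psum Z n x)%:E <= U n)%E) ->
  (forall n, (1 <= n)%N -> (U n <= 0)%E) ->
  (forall n, (1 <= n)%N ->
     (\int[P]_x (psum Z n x ^+ 2)%:E <= (M0 * n%:R)%:E + U n * U n)%E) ->
  P [set w | (limn_esup (fun n => (psum Z n w / n%:R)%:E) <= 0)%E] = 1%E.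
Proof.
move=> mZ M00 M10 hZ hT hU0 hT2.
have mT n : measurable_fun setT (psum Z n).
  by rewrite /psum; apply: measurable_sum => l; exact: mZ.
have iZ l : (1 <= l)%N -> P.-integrable setT (EFin \o Z l).
  by move=> hl; exact: (@sq_int _ _ _ P _ (mZ l) (le_lt_trans (hZ l hl) (ltry _))).2.
have iT n : P.-integrable setT (EFin \o psum Z n).
  elim: n => [|n IH].
    have -> : EFin \o psum Z 0 = EFin \o cst 0.
      by apply/funext => x; rewrite /psum /= big_geq.
    exact: finite_measure_integrable_cst.
  have -> : EFin \o psum Z n.+1 = (EFin \o psum Z n) \+ (EFin \o Z n.+1).
    by apply/funext => x; rewrite /psum /= big_nat_recr //= EFinD.
  exact: integrableD IH (iZ _ _).
pose m n := fine (\int[P]_x (psum Z n x)%:E).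
have hm n : (\int[P]_x (psum Z n x)%:E = (m n)%:E)%E.
  by rewrite /m fineK //; exact: (integrable_fin_num measurableT (iT n)).
have hU n : (1 <= n)%N -> m n <= fine (U n) <= 0 /\ U n = (fine (U n))%:E.
  move=> hn; have := hT n hn; have := hU0 n hn; rewrite hm.
  by case: (U n) => [v| |] //=; rewrite !lee_fin => -> ->.
have hm0 n : (1 <= n)%N -> m n <= 0.
  by move=> hn; have [/andP[h1 h2] _] := hU n hn; exact: le_trans h1 h2.
have iT2 n : (1 <= n)%N -> P.-integrable setT (EFin \o (fun x => psum Z n x ^+ 2)).
  move=> hn; have [_ hUe] := hU n hn.
  apply: (proj1 (@sq_int _ _ _ P _ (mT n) _)).
  apply: le_lt_trans (hT2 n hn) _; rewrite hUe -EFinM -EFinD; exact: ltry.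
have hvar n : (1 <= n)%N ->
    (\int[P]_x ((psum Z n x - m n) ^+ 2)%:E <= (M0 * n%:R)%:E)%E.
  move=> hn; have [/andP[h1 h2] hUe] := hU n hn.
  have h2' := hT2 n hn; rewrite hUe -EFinM -EFinD in h2'.
  have fq := integrable_fin_num measurableT (iT2 n hn).
  have hq : (\int[P]_x (psum Z n x ^+ 2)%:E =
             (fine (\int[P]_x (psum Z n x ^+ 2)%:E))%:E)%E by rewrite fineK.
  rewrite hq lee_fin in h2'.
  rewrite (_ : (\int[P]_x ((psum Z n x - m n) ^+ 2)%:E =
     \int[P]_x ((psum Z n x ^+ 2)%:E + ((- 2 * m n)%:E * (psum Z n x)%:E + (m n ^+ 2)%:E)))%E); last first.
    by apply: eq_integral => x _; rewrite -EFinM -!EFinD; congr EFin; ring.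
  rewrite (integralD measurableT (iT2 n hn)); last first.
    exact: (integrableD measurableT (integrableZl measurableT (-2 * m n) (iT n)) (finite_measure_integrable_cst P (m n ^+ 2) measurableT)).
  rewrite (integralD measurableT (integrableZl measurableT (-2 * m n) (iT n)) (finite_measure_integrable_cst P (m n ^+ 2) measurableT)).
  rewrite (integralZl measurableT (iT n)).
  have hc : (\int[P]_x (EFin \o cst (m n ^+ 2)%R) x = (m n ^+ 2)%R%:E)%E.
    have P1 : ((P : measure T R) setT = 1)%E by exact: probability_setT.
    have := integral_cst P measurableT ((m n ^+ 2)%R%:E). move=> h; rewrite P1 mule1 in h. exact: h.
  rewrite hc hm hq -EFinM -!EFinD lee_fin.
  set q := fine _ in h2' *; nra.
pose N k := (k.+1 * k.+1)%N.
pose Q k w := \sum_((N k).+1 <= l < (k.+2 * k.+2).+1) Z l w ^+ 2.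
pose W1 k : R := k.+1%:R ^+ 3 * k.+2%:R.
pose W2 k : R := k.+1%:R ^+ 2 * k.+2%:R.
pose f k w := (psum Z (N k) w - m (N k)) ^+ 2 / W1 k + Q k w / W2 k.
have W1p k : 0 < W1 k by rewrite /W1 mulr_gt0 // exprn_gt0.
have W2p k : 0 < W2 k by rewrite /W2 mulr_gt0 // exprn_gt0.
have Q0 k w : 0 <= Q k w by apply: sumr_ge0 => l _; exact: sqr_ge0.
have f0 k w : 0 <= f k w.
  by rewrite /f addr_ge0 // divr_ge0 ?sqr_ge0 ?Q0 // ltW.
have mQ k : measurable_fun setT (Q k).
  by apply: measurable_sum => l; apply: measurable_funX.
have mf k : measurable_fun setT (f k).
  apply: measurable_funD.
    apply: measurable_funM => //; apply: measurable_funX.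
    by apply: measurable_funB.
  by apply: measurable_funM.
have hQ k : (\int[P]_x (Q k x)%:E <= (3 * k.+1%:R * M1)%:E)%E.
  rewrite /Q; under eq_integral do rewrite -sumEFin.
  rewrite ge0_integral_sum //; last 2 first.
  - by move=> l; apply/measurable_EFinP; apply: measurable_funX.
  - by move=> l x _; rewrite lee_fin sqr_ge0.
  rewrite big_nat_cond.
  apply: le_trans (lee_sum (g := fun _ => M1%:E) _ _) _.
    by move=> i /andP[/andP[hi _] _]; apply: hZ; rewrite /N in hi; lia.
  rewrite -big_nat_cond sumEFin sumr_const_nat lee_fin -[M1 *+ _]mulr_natr [_ * M1]mulrC ler_wpM2l ?(ltW M10) //.
  rewrite -natrM ler_nat /N; lia.
have hf k : (\int[P]_x (f k x)%:E <= ((M0 + 3 * M1) / (k.+1%:R * k.+2%:R))%:E)%E.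
  rewrite (_ : (\int[P]_x (f k x)%:E = \int[P]_x ((W1 k)^-1%:E * ((psum Z (N k) x - m (N k)) ^+ 2)%:E
       + (W2 k)^-1%:E * (Q k x)%:E))%E); last first.
    by apply: eq_integral => x _; rewrite -!EFinM -EFinD /f !(mulrC (_^-1)).
  rewrite ge0_integralD //; last 4 first.
  - by move=> x _; rewrite -EFinM lee_fin mulr_ge0 ?sqr_ge0 // invr_ge0 ltW.
  - apply: measurable_funeM; apply/measurable_EFinP; apply: measurable_funX.
    by apply: measurable_funB.
  - by move=> x _; rewrite -EFinM lee_fin mulr_ge0 ?Q0 // invr_ge0 ltW.
  - by apply: measurable_funeM; apply/measurable_EFinP.
  rewrite ge0_integralZl //; last 3 first.
  - apply/measurable_EFinP; apply: measurable_funX.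
    by apply: measurable_funB.
  - by move=> x _; rewrite lee_fin sqr_ge0.
  - by rewrite lee_fin invr_ge0 ltW.
  rewrite ge0_integralZl //; last 3 first.
  - by apply/measurable_EFinP.
  - by move=> x _; rewrite lee_fin.
  - by rewrite lee_fin invr_ge0 ltW.
  have hN : (1 <= N k)%N by rewrite /N; lia.
  apply: le_trans (leeD (lee_wpmul2l _ (hvar _ hN)) (lee_wpmul2l _ (hQ k))) _.
  - by rewrite lee_fin invr_ge0 ltW.
  - by rewrite lee_fin invr_ge0 ltW.
  rewrite -!EFinM -EFinD lee_fin le_eqVlt; apply/orP; left; apply/eqP.
  rewrite /N /W1 /W2 natrM.
  have h1 : k.+1%:R != 0 :> R by rewrite pnatr_eq0.
  have h2 : k.+2%:R != 0 :> R by rewrite pnatr_eq0.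
  field; have := ler0n R k.
  by move=> h; apply/andP; split; rewrite gt_eqF //; lra.
pose V w := (\sum_(k <oo) (f k w)%:E)%E.
have mfE k : measurable_fun setT (fun w => (f k w)%:E) by apply/measurable_EFinP.
have mV : measurable_fun setT V.
  have := @ge0_emeasurable_sum _ _ _ setT (fun k w => (f k w)%:E) xpredT.
  move=> h; apply: h => //; by move=> k x _ _; rewrite lee_fin.
have V0 w : (0 <= V w)%E by apply: nneseries_ge0 => i _ _; rewrite lee_fin.
have EV : (\int[P]_x V x <= (M0 + 3 * M1)%:E)%E.
  rewrite /V integral_nneseries //; last by move=> k w _; rewrite lee_fin.
  apply: le_trans (lee_nneseries (v := fun k => ((M0 + 3 * M1) / (k.+1%:R * k.+2%:R))%:E) _ _) _.
  - by move=> i _ _; apply: integral_ge0 => x _; rewrite lee_fin.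
  - by move=> n _; exact: hf.
  apply: lime_le.
    by apply: is_cvg_nneseries => i _ _; rewrite lee_fin divr_ge0 // addr_ge0 // ?mulr_ge0 // ltW.
  apply: nearW => n; rewrite sumEFin lee_fin tele lerBlDr lerDl divr_ge0 //.
  by rewrite addr_ge0 // ?mulr_ge0 // ltW.
have iV : P.-integrable setT V.
  apply/integrableP; split => //.
  have -> : (\int[P]_x `|V x| = \int[P]_x V x)%E.
    by apply: eq_integral => x _; rewrite gee0_abs.
  exact: le_lt_trans EV (ltry _).
have aeV := integrable_ae measurableT iV.
have contain w : V w \is a fin_num ->
    (limn_esup (fun n => (psum Z n w / n%:R)%:E) <= 0)%E.
  move=> Vf.
  have g0 := @terms0 _ (fun k => f k w) (fun k => f0 k w) Vf.
  apply: (@det _ (fun l => Z l w) m (fun k => f k w)) => //.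
  - by move=> k; apply: hm0; lia.
  - move=> k; rewrite -ler_pdivrMr; last exact: (W1p k).
    rewrite /f lerDl divr_ge0 // ltW //.
  - move=> k; rewrite -ler_pdivrMr; last exact: (W2p k).
    rewrite /f lerDr divr_ge0 ?sqr_ge0 // ltW //.
set A := [set w | _].
have mA : measurable A.
  have mL := @measurable_fun_limn_esup _ _ _ setT (fun n w => (psum Z n w / n%:R)%:E) _.
  have := mL _ measurableT [set x : \bar R | (x <= 0)%E].
  rewrite setTI; apply.
    by move=> n; apply/measurable_EFinP; apply: measurable_funM.
  have -> : [set x : \bar R | (x <= 0)%E] = [set` `]-oo, 0%E]].
    by apply/seteqP; split => x /=; rewrite in_itv.
  exact: emeasurable_itv.
have [N0 [mN0 PN0 sub]] := aeV.
have PC : P (~` A) = 0%E.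
  apply/eqP; rewrite eq_le measure_ge0 andbT -PN0; apply: le_measure; rewrite ?inE //.
    exact: measurableC.
  move=> w /= nA; apply: sub => /= h; apply: nA; exact: contain (h I).
move: PC; rewrite probability_setC //.
have : P A \is a fin_num by exact: fin_num_measure.
case: (P A) => // r _ /eqP; rewrite -EFinB eqe subr_eq0 => /eqP <-.
by [].
Qed.

Theorem theorem3p1 (d : measure_display) (T : measurableType d) (R : realType)
  (Pfam : set (probability T R)) (Z : nat -> T -> R) (M0 M1 : R) :
  Pfam !=set0 ->
  (forall l, measurable_fun setT (Z l)) ->
  0 < M0 -> 0 < M1 ->
  (forall n, (1 <= n)%N -> (upperE Pfam (psum Z n) <= 0)%E) ->
  (forall n, (1 <= n)%N ->
     (upperE Pfam (fun w => (psum Z n w ^+ 2)%R)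
       <= (M0 * n%:R)%R%:E + upperE Pfam (psum Z n) * upperE Pfam (psum Z n))%E) ->
  (forall n1 n2, (1 <= n1)%N -> (n1 <= n2)%N ->
     (\sum_(n1 <= l < n2.+1) upperE Pfam (fun w => (Z l w ^+ 2)%R)
       <= (M1 * (n2 - n1 + 1)%:R)%R%:E)%E) ->
  lowerP Pfam [set w | (limn_esup (fun n => (psum Z n w / n%:R)%R%:E) <= 0)%E] = 1%E.
Proof.
move=> [P0 PP0] mZ M00 M10 h1 h2 h3.
set A := [set w | _].
have key P : Pfam P -> P A = 1%E.
  move=> PP; apply: (@per_P _ _ _ P Z M0 M1 (fun n => upperE Pfam (psum Z n))) => //.
  - move=> l hl; have := h3 l l hl (leqnn l).
    rewrite big_nat1 subnn add0n mulr1 => h; apply: le_trans h.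
    by apply: ereal_sup_ubound; exists P.
  - by move=> n hn; apply: ereal_sup_ubound; exists P.
  - move=> n hn; apply: le_trans (h2 n hn).
    by apply: ereal_sup_ubound; exists P.
rewrite /lowerP (_ : [set P A | P in Pfam] = [set 1%E]) ?ereal_inf1 //.
apply/seteqP; split => x /=.
  by move=> [P hP <-]; exact: key.
by move=> ->; exists P0 => //; exact: key.
Qed.
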